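(* Let $\mathcal{A}$ be a finite set of alternatives, $N\ge2$, $i\in\{1,\dots,N\}$, and $w:\underline{\mathcal{P}}^N\to\underline{\mathcal{P}}$. Then (the restriction to $\mathcal{P}^N$ of) $w$ has a dictator at individual $i$ if and only if for every $p\in\mathcal{P}^N$: $+_i(p,w(p))=p$.
   Context: $\mathcal{P}$ is the set of weak orders on $\mathcal{A}$; $\underline{\mathcal{P}}=\mathcal{P}\cup\{\mathbf{c}\}$ with a new element $\mathbf{c}$; $\mathcal{P}^N$ and $\underline{\mathcal{P}}^N$ are the sets of $N$-tuples (profiles) over $\mathcal{P}$ and $\underline{\mathcal{P}}$. Strictness order: for weak orders, $r\le s$ iff every strict preference of $s$ is a strict preference of $r$; $\mathbf{c}$ is added as bottom element; $\mathbf{i}$ (total indifference) is the top. $\vee$ is least upper bound. $r+s=r\vee s$ if $r,s\in\mathcal{P}$, and $r+s=\mathbf{i}$ if $r=\mathbf{c}$ or $s=\mathbf{c}$. The map $+_i:\underline{\mathcal{P}}^N\times\underline{\mathcal{P}}\to\underline{\mathcal{P}}^N$ is $+_i((p_1,\dots,p_i,\dots,p_N),r)=(p_1,\dots,p_i+r,\dots,p_N)$. $w$ has a dictator at $i$ if for all $p\in\mathcal{P}^N$: (1) $w(p)=\mathbf{c}$ implies $p_i=\mathbf{i}$; (2) $p_i\ne\mathbf{i}$ implies $w(p)\le p_i$. *)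

(* Defs.v *)
From mathcomp Require Import all_boot.
From Stdlib Require Import ClassicalEpsilon.
Set Implicit Arguments. Unset Strict Implicit. Unset Printing Implicit Defensive.

Record weak_order (A : finType) := WeakOrder {
  wo_rel :> rel A;
  wo_total : total wo_rel;
  wo_trans : transitive wo_rel }.

Section WeakOrders.
Variable A : finType.

Definition strict (r : weak_order A) (a b : A) : bool := r a b && ~~ r b a.

Definition wo_le (r s : weak_order A) : Prop :=
  forall a b, strict s a b -> strict r a b.

Definition indiff : weak_order A :=
  @WeakOrder A (fun _ _ => true) (fun _ _ => erefl true) (fun _ _ _ _ _ => erefl true).

Definition is_lub (r s t : weak_order A) : Prop :=
  wo_le r t /\ wo_le s t /\ (forall u, wo_le r u -> wo_le s u -> wo_le t u).

(* r \/ s : the least upper bound (chosen by Hilbert epsilon; it exists) *)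
Definition wo_join (r s : weak_order A) : weak_order A :=
  epsilon (inhabits indiff) (is_lub r s).

(* underline-P = P u {c}, encoded as option (weak_order A), c := None *)
Definition uP := option (weak_order A).
Definition cbot : uP := None.

Definition uP_le (x y : uP) : Prop :=
  match x, y with
  | None, _ => True
  | Some _, None => False
  | Some r, Some s => wo_le r s
  end.

Definition uP_add (x y : uP) : uP :=
  match x, y with
  | Some r, Some s => Some (wo_join r s)
  | _, _ => Some indiff
  end.

Definition add_at (N : nat) (i : 'I_N) (p : 'I_N -> uP) (r : uP) : 'I_N -> uP :=
  fun j => if j == i then uP_add (p j) r else p j.

Definition emb (N : nat) (p : 'I_N -> weak_order A) : 'I_N -> uP :=
  fun j => Some (p j).

Definition has_dictator (N : nat) (w : ('I_N -> uP) -> uP) (i : 'I_N) : Prop :=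
  forall p : 'I_N -> weak_order A,
    (w (emb p) = cbot -> p i = indiff) /\
    (p i <> indiff -> uP_le (w (emb p)) (Some (p i))).

End WeakOrders.

(* Main.v *)
From Stdlib Require Import ClassicalEpsilon Classical ProofIrrelevance FunctionalExtensionality.
Require Import Defs.
From mathcomp Require Import all_boot.
Set Implicit Arguments. Unset Strict Implicit. Unset Printing Implicit Defensive.

Section Aux.
Variable A : finType.

Definition cutb (u : weak_order A) (C : {set A}) : bool :=
  [forall x, forall y, (x \in C) ==> u y x ==> (y \in C)].

Lemma cutP (u : weak_order A) C x y : cutb u C -> x \in C -> u y x -> y \in C.
Proof. by move=> /forallP /(_ x) /forallP /(_ y) /implyP H /H /implyP. Qed.

Lemma cut_chain (u : weak_order A) C1 C2 : cutb u C1 -> cutb u C2 ->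
  C1 \subset C2 \/ C2 \subset C1.
Proof.
move=> H1 H2.
case: (boolP (C1 \subset C2)) => [s12|/subsetPn [x x1 x2]]; first by left.
right; apply/subsetP => y y2; case: (orP (wo_total u x y)) => uxy.
- by rewrite (cutP H2 y2 uxy) in x2.
- exact: (cutP H1 x1 uxy).
Qed.

Lemma wo_refl (u : weak_order A) a : u a a.
Proof. by have := wo_total u a a; rewrite orbb. Qed.

Definition jrel (q r : weak_order A) : rel A := fun a b =>
  [forall C : {set A}, cutb q C ==> cutb r C ==> (b \in C) ==> (a \in C)].

Lemma jrelP q r a b : reflect (forall C, cutb q C -> cutb r C -> b \in C -> a \in C)
  (jrel q r a b).
Proof.
apply: (iffP forallP) => H C.
  by move=> h1 h2 h3; move: (H C); rewrite h1 h2 h3.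
by apply/implyP => h1; apply/implyP => h2; apply/implyP; apply: H.
Qed.

Lemma jrel_total q r : total (jrel q r).
Proof.
move=> a b; apply/orP; apply: NNPP => Hn.
have Hab : ~ jrel q r a b by move=> h; apply: Hn; left.
have Hba : ~ jrel q r b a by move=> h; apply: Hn; right.
have [C1 [c1q c1r b1 a1]] : exists C, [/\ cutb q C, cutb r C, b \in C & a \notin C].
  apply: NNPP => H; apply: Hab; apply/jrelP => C h1 h2 h3.
  apply: NNPP => h4; apply: H; exists C; split => //; exact/negP.
have [C2 [c2q c2r a2 b2]] : exists C, [/\ cutb q C, cutb r C, a \in C & b \notin C].
  apply: NNPP => H; apply: Hba; apply/jrelP => C h1 h2 h3.
  apply: NNPP => h4; apply: H; exists C; split => //; exact/negP.
case: (cut_chain c1q c2q) => /subsetP S.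
  by rewrite (S _ b1) in b2.
by rewrite (S _ a2) in a1.
Qed.

Lemma jrel_trans q r : transitive (jrel q r).
Proof.
move=> b a c /jrelP H1 /jrelP H2; apply/jrelP => C h1 h2 h3.
by apply: H1 => //; apply: H2.
Qed.

Definition jwo q r := WeakOrder (@jrel_total q r) (@jrel_trans q r).

Lemma strict_jrel q r a b : strict (jwo q r) a b ->
  exists C, [/\ cutb q C, cutb r C, a \in C & b \notin C].
Proof.
case/andP=> _ Hn; apply: NNPP => H; move/negP: Hn; apply; apply/jrelP => C h1 h2 h3.
apply: NNPP => h4; apply: H; exists C; split => //; exact/negP.
Qed.

Lemma cut_strict (u : weak_order A) C a b : cutb u C -> a \in C -> b \notin C ->
  strict u a b.
Proof.
move=> hc ha hb; have nba : ~~ u b a.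
  by apply/negP => h; rewrite (cutP hc ha h) in hb.
by rewrite /strict nba andbT; have := wo_total u a b; rewrite (negbTE nba) orbF.
Qed.

Lemma jwo_lub q r : is_lub q r (jwo q r).
Proof.
split; [|split].
- by move=> a b /strict_jrel [C [h1 h2 h3 h4]]; apply: (cut_strict h1).
- by move=> a b /strict_jrel [C [h1 h2 h3 h4]]; apply: (cut_strict h2).
move=> u Hq Hr a b Hu.
pose C := [set x | u x a].
have cutC : forall v : weak_order A, wo_le v u -> cutb v C.
  move=> v Hv; apply/forallP => x; apply/forallP => y; apply/implyP.
  rewrite !inE => uxa; apply/implyP => vyx.
  apply: NNPP => nuya; move/negP: nuya => nuya.
  have nuyx : ~~ u y x by apply/negP => h; rewrite (wo_trans h uxa) in nuya.
  have sxy : strict u x y.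
    by rewrite /strict nuyx andbT; have := wo_total u x y; rewrite (negbTE nuyx) orbF.
  by move/Hv: sxy => /andP [_ /negP]; apply.
have aC : a \in C by rewrite inE wo_refl.
have bC : b \notin C by rewrite inE; case/andP: Hu.
have nba : ~~ jrel q r b a.
  by apply/negP => /jrelP H; move: (H C (cutC _ Hq) (cutC _ Hr) aC); rewrite (negbTE bC).
by rewrite /strict /= nba andbT; have := jrel_total q r a b; rewrite (negbTE nba) orbF.
Qed.

Lemma join_lub (q r : weak_order A) : is_lub q r (wo_join q r).
Proof.
rewrite /wo_join; apply: epsilon_spec; exists (jwo q r); exact: jwo_lub.
Qed.

Lemma wo_le_refl (u : weak_order A) : wo_le u u.
Proof. by []. Qed.

Lemma wo_antisym (u v : weak_order A) : wo_le u v -> wo_le v u -> u = v.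
Proof.
move=> H1 H2.
have E : forall a b, u a b = v a b.
  move=> a b; apply/idP/idP => h.
  - apply: NNPP => /negP nv.
    have : strict v b a.
      by rewrite /strict nv andbT; have := wo_total v a b; rewrite (negbTE nv).
    by move/H1 => /andP [_ /negP].
  - apply: NNPP => /negP nu.
    have : strict u b a.
      by rewrite /strict nu andbT; have := wo_total u a b; rewrite (negbTE nu).
    by move/H2 => /andP [_ /negP].
case: u v E {H1 H2} => [ru tu tru] [rv tv trv] /= E.
have Er : ru = rv by apply: functional_extensionality => a; apply: functional_extensionality => b; apply: E.
subst rv; f_equal; apply: proof_irrelevance.
Qed.

Lemma join_eq (q r : weak_order A) : wo_join q r = q <-> wo_le r q.
Proof.
have [H1 [H2 H3]] := join_lub q r.
split; first by move=> E; rewrite -E.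
move=> Hr; apply: wo_antisym; last exact: H1.
exact: H3.
Qed.

Lemma le_indiff (r : weak_order A) : wo_le r (indiff A).
Proof. by move=> a b; rewrite /strict /=. Qed.

End Aux.

Theorem proposition4 (A : finType) (N : nat) (hN : 2 <= N) (i : 'I_N)
    (w : ('I_N -> uP A) -> uP A) :
  has_dictator w i <->
  (forall p : 'I_N -> weak_order A, add_at i (emb p) (w (emb p)) = emb p).
Proof.
split.
- move=> D p; apply: functional_extensionality => j; rewrite /add_at.
  case: eqP => [->|//]; have [D1 D2] := D p.
  rewrite /emb /=; case E: (w _) => [r|] /=.
    congr Some; apply/join_eq.
    case: (classic (p i = indiff A)) => [->|h]; first exact: le_indiff.
    by have := D2 h; rewrite E.
  by rewrite D1.
- move=> H p; have := f_equal (fun f => f i) (H p); rewrite /add_at eqxx /emb /=.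
  case: (w _) => [r|] /= [] E; split => //.
  by move=> _; apply/join_eq.
Qed.
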